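(* The class of all irreflexive symmetric frames with at least $2$ elements is relatively elementary definable in $\mathcal{K}_2$.
   Context: A frame is a pair $(W,R)$ with $W$ non-empty and $R\subseteq W\times W$. For sets $A,B$ with $A\cap B=\emptyset$, $A\cup B\neq\emptyset$, and a function $\rho:A\to\wp(B)$, the galaxy $\mathcal{F}^{\rho}_{A,B}$ is the frame with universe $A\cup B$ and relation $\bigcup_{s\in A}(\{s\}\times\rho(s))\cup(B\times B)$. $\mathcal{K}_2$ is the class of all galaxies $\mathcal{F}^{\rho}_{A,B}$ with $|A|\ge4$, $|B|\ge4$ and $|\rho(s)|=2$ for all $s\in A$. First-order formulas use one binary relation symbol $\mathbf{R}$ and equality. A class $\mathcal{C}$ of frames is relatively elementary definable in a class $\mathcal{C}'$ if there are first-order formulas $\mathbf{U}(\mathbf{x}_1,\mathbf{x}_2)$, $\mathbf{E}(\mathbf{x}_1,\mathbf{x}_2,\mathbf{y}_1,\mathbf{y}_2)$, $\mathbf{A}(\mathbf{x}_1,\mathbf{x}_2,\mathbf{y}_1,\mathbf{y}_2)$ such that for every frame $(W,R)\in\mathcal{C}$ there is a frame $(W',R')\in\mathcal{C}'$ such that, letting $X$ be the set of pairs $(s_1,s_2)\in W'^2$ satisfying $\mathbf{U}$ in $(W',R')$, $\eta$ the binary relation on $X$ defined by $\mathbf{E}$ and $S$ the binary relation on $X$ defined by $\mathbf{A}$: $X$ is non-empty, $\eta$ is a congruence on $(X,S)$ (an equivalence relation on $X$ such that $a\,\eta\,c$ and $b\,\eta\,d$ imply ($aSb$ iff $cSd$)),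 and the quotient $(X,S)/\eta$ is isomorphic to $(W,R)$. *)

(* Defs.v *)
Inductive formula : Type :=
  | FFalse : formula
  | FEq : nat -> nat -> formula
  | FRel : nat -> nat -> formula
  | FNot : formula -> formula
  | FAnd : formula -> formula -> formula
  | FOr : formula -> formula -> formula
  | FImp : formula -> formula -> formula
  | FForall : nat -> formula -> formula
  | FExists : nat -> formula -> formula.

Definition update {W : Type} (v : nat -> W) (x : nat) (a : W) : nat -> W :=
  fun y => if Nat.eqb y x then a else v y.

Fixpoint sat {W : Type} (R : W -> W -> Prop) (v : nat -> W) (phi : formula) : Prop :=
  match phi with
  | FFalse => False
  | FEq x y => v x = v y
  | FRel x y => R (v x) (v y)
  | FNot p => ~ sat R v p
  | FAnd p q => sat R v p /\ sat R v q
  | FOr p q => sat R v p \/ sat R v q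
  | FImp p q => sat R v p -> sat R v q
  | FForall x p => forall a : W, sat R (update v x a) p
  | FExists x p => exists a : W, sat R (update v x a) p
  end.

Fixpoint fv_in (phi : formula) (P : nat -> Prop) : Prop :=
  match phi with
  | FFalse => True
  | FEq x y => P x /\ P y
  | FRel x y => P x /\ P y
  | FNot p => fv_in p P
  | FAnd p q | FOr p q | FImp p q => fv_in p P /\ fv_in q P
  | FForall x p | FExists x p => fv_in p (fun z => z = x \/ P z)
  end.

(** Valuations interpreting variables x1,x2 (= 0,1) and y1,y2 (= 2,3). *)
Definition env2 {W : Type} (s1 s2 : W) : nat -> W :=
  fun n => match n with 0 => s1 | _ => s2 end.
Definition env4 {W : Type} (s1 s2 t1 t2 : W) : nat -> W :=
  fun n => match n with 0 => s1 | 1 => s2 | 2 => t1 | _ => t2 end.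

Definition galaxy_rel (A B : Type) (rho : A -> B -> Prop) (x y : A + B) : Prop :=
  match x, y with
  | inl s, inr b => rho s b
  | inr _, inr _ => True
  | _, _ => False
  end.

Definition atleast4 (T : Type) : Prop :=
  exists a b c d : T, a <> b /\ a <> c /\ a <> d /\ b <> c /\ b <> d /\ c <> d.

Definition in_K2 (A B : Type) (rho : A -> B -> Prop) : Prop :=
  atleast4 A /\ atleast4 B /\
  forall s : A, exists b1 b2 : B, b1 <> b2 /\ forall b, rho s b <-> (b = b1 \/ b = b2).

(** The quotient (X,S)/eta of the structure interpreted by U, E, A in (W',R')
    is defined, and isomorphic to (W,R). X = {(s1,s2) | U}, eta, S as in the paper. *)
Definition interprets {W' : Type} (R' : W' -> W' -> Prop) (U E A : formula)
    {W : Type} (R : W -> W -> Prop) : Prop :=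
  let X := fun s1 s2 : W' => sat R' (env2 s1 s2) U in
  let eta := fun s1 s2 t1 t2 : W' => sat R' (env4 s1 s2 t1 t2) E in
  let S := fun s1 s2 t1 t2 : W' => sat R' (env4 s1 s2 t1 t2) A in
  (exists s1 s2, X s1 s2) /\
  (forall s1 s2, X s1 s2 -> eta s1 s2 s1 s2) /\
  (forall s1 s2 t1 t2, X s1 s2 -> X t1 t2 -> eta s1 s2 t1 t2 -> eta t1 t2 s1 s2) /\
  (forall s1 s2 t1 t2 u1 u2, X s1 s2 -> X t1 t2 -> X u1 u2 ->
      eta s1 s2 t1 t2 -> eta t1 t2 u1 u2 -> eta s1 s2 u1 u2) /\
  (forall a1 a2 b1 b2 c1 c2 d1 d2, X a1 a2 -> X b1 b2 -> X c1 c2 -> X d1 d2 ->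
      eta a1 a2 c1 c2 -> eta b1 b2 d1 d2 -> (S a1 a2 b1 b2 <-> S c1 c2 d1 d2)) /\
  (* (X,S)/eta is isomorphic to (W,R): via a map f : X -> W inducing a bijection
     X/eta -> W which is an isomorphism of relations *)
  (exists f : W' -> W' -> W,
      (forall w : W, exists s1 s2, X s1 s2 /\ f s1 s2 = w) /\
      (forall s1 s2 t1 t2, X s1 s2 -> X t1 t2 ->
          (eta s1 s2 t1 t2 <-> f s1 s2 = f t1 t2) /\
          (S s1 s2 t1 t2 <-> R (f s1 s2) (f t1 t2)))).

(* Main.v *)
Require Import Defs.
From Stdlib Require Import Lia ProofIrrelevance.


Definition iffF p q := FAnd (FImp p q) (FImp q p).
Definition U0 := FAnd (FNot (FRel 0 0)) (FAnd (FNot (FRel 1 1)) (FAnd (FNot (FEq 0 1)) (FForall 4 (iffF (FRel 0 4) (FRel 1 4))))).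
Definition E0 := FForall 4 (iffF (FRel 0 4) (FRel 2 4)).
Definition A0 := FExists 4 (FExists 5 (FExists 6 (FAnd (FNot (FRel 4 4)) (FAnd (FRel 0 5) (FAnd (FRel 2 6) (FAnd (FRel 4 5) (FAnd (FRel 4 6) (FNot (FRel 0 6))))))))).

Lemma satU {T} (Rg : T -> T -> Prop) s1 s2 :
  sat Rg (env2 s1 s2) U0 <-> (~Rg s1 s1 /\ ~Rg s2 s2 /\ s1<>s2 /\ forall a, (Rg s1 a -> Rg s2 a) /\ (Rg s2 a -> Rg s1 a)).
Proof. cbn. tauto. Qed.
Lemma satE {T} (Rg : T -> T -> Prop) s1 s2 t1 t2 :
  sat Rg (env4 s1 s2 t1 t2) E0 <-> (forall a, (Rg s1 a -> Rg t1 a) /\ (Rg t1 a -> Rg s1 a)).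
Proof. cbn. tauto. Qed.
Lemma satA {T} (Rg : T -> T -> Prop) s1 s2 t1 t2 :
  sat Rg (env4 s1 s2 t1 t2) A0 <-> (exists s b c, ~Rg s s /\ Rg s1 b /\ Rg t1 c /\ Rg s b /\ Rg s c /\ ~ Rg s1 c).
Proof. cbn. split; intros [s [b [c H]]]; exists s, b, c; tauto. Qed.
Section S.
Variable W : Type.
Variable R : W -> W -> Prop.
Hypothesis Hirr : forall w, ~ R w w.
Hypothesis Hsym : forall w u, R w u -> R u w.

Definition GA := ((W*bool) + {p : W*W | R (fst p) (snd p)})%type.
Definition GB := (W*bool)%type.
Definition rho (s : GA) (b : GB) : Prop :=
  match s with
  | inl (w, _) => fst b = w
  | inr p => b = (fst (proj1_sig p), false) \/ b = (snd (proj1_sig p), true)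
  end.
Definition Rg := galaxy_rel GA GB rho.

Lemma Xchar s1 s2 : sat Rg (env2 s1 s2) U0 ->
  exists w i j, s1 = inl (inl (w,i)) /\ s2 = inl (inl (w,j)).
Proof.
  rewrite satU. intros [H1 [H2 [H3 H4]]].
  destruct s1 as [a|b]; [|exfalso; apply H1; exact I].
  destruct s2 as [a'|b']; [|exfalso; apply H2; exact I].
  destruct a as [[w i]|[[p1 p2] hp]]; destruct a' as [[w' j]|[[q1 q2] hq]]; cbn in *.
  - exists w, i, j. split; [reflexivity|].
    destruct (H4 (inr (w, false))) as [Ha _]. specialize (Ha eq_refl). cbn in Ha. now subst.
  - exfalso.
    destruct (H4 (inr (w, false))) as [Ha _]. specialize (Ha eq_refl). cbn in Ha.
    destruct (H4 (inr (w, true))) as [Hb _]. specialize (Hb eq_refl). cbn in Hb.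
    destruct Ha as [Ha|Ha]; inversion Ha; destruct Hb as [Hb|Hb]; inversion Hb; subst.
    match goal with h : R ?x ?x |- _ => exact (Hirr _ h) end.
  - exfalso.
    destruct (H4 (inr (w', false))) as [_ Ha]. specialize (Ha eq_refl). cbn in Ha.
    destruct (H4 (inr (w', true))) as [_ Hb]. specialize (Hb eq_refl). cbn in Hb.
    destruct Ha as [Ha|Ha]; inversion Ha; destruct Hb as [Hb|Hb]; inversion Hb; subst.
    match goal with h : R ?x ?x |- _ => exact (Hirr _ h) end.
  - exfalso. apply H3.
    destruct (H4 (inr (p1, false))) as [Ha _]. specialize (Ha (or_introl eq_refl)). cbn in Ha.
    destruct (H4 (inr (p2, true))) as [Hb _]. specialize (Hb (or_intror eq_refl)). cbn in Hb.
    destruct Ha as [Ha|Ha]; inversion Ha; destruct Hb as [Hb|Hb]; inversion Hb; subst.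
    all: match goal with hp : R _ _, hq : R _ _ |- _ => rewrite (proof_irrelevance _ hp hq); reflexivity end.
Qed.

Lemma Xvert w : sat Rg (env2 (inl (inl (w,false))) (inl (inl (w,true)))) U0.
Proof.
  rewrite satU. cbn. split; [tauto|split; [tauto|split]].
  - intro H; inversion H.
  - intros [x|[x k]]; cbn; tauto.
Qed.

Lemma Echar w i u k s2 t2 :
  sat Rg (env4 (inl (inl (w,i))) s2 (inl (inl (u,k))) t2) E0 <-> w = u.
Proof.
  rewrite satE. split.
  - intro H. destruct (H (inr (w,false))) as [Ha _]. exact (Ha eq_refl).
  - intros <- a. destruct a as [x|[x l]]; cbn; tauto.
Qed.

Lemma Achar w i u k s2 t2 :
  sat Rg (env4 (inl (inl (w,i))) s2 (inl (inl (u,k))) t2) A0 <-> R w u.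
Proof.
  rewrite satA. split.
  - intros [s [b [c [Hs [Hb [Hc [Hsb [Hsc Hn]]]]]]]].
    destruct s as [a|]; [|exfalso; apply Hs; exact I].
    destruct b as [|[b bb]]; [destruct Hb|]. destruct c as [|[c cc]]; [destruct Hc|].
    cbn in *. subst.
    destruct a as [[x j]|[[p1 p2] hp]]; cbn in *.
    + exfalso; apply Hn; congruence.
    + destruct Hsb as [Hsb|Hsb]; inversion Hsb; destruct Hsc as [Hsc|Hsc]; inversion Hsc; subst;
        try (exfalso; apply Hn; reflexivity); auto.
  - intro H. exists (inl (inr (exist (fun p : W*W => R (fst p) (snd p)) (w,u) H)) : GA + GB), (inr (w,false)), (inr (u,true)).
    cbn. split; [tauto|]. split; [reflexivity|]. split; [reflexivity|].
    split; [left; reflexivity|]. split; [right; reflexivity|].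
    intro E. subst. exact (Hirr _ H).
Qed.

Lemma inK2 (w u : W) : w <> u -> in_K2 GA GB rho.
Proof.
  intro Hwu. split; [|split].
  - exists (inl (w,false)), (inl (w,true)), (inl (u,false)), (inl (u,true)).
    repeat split; intro E; inversion E; subst; tauto.
  - exists (w,false), (w,true), (u,false), (u,true).
    repeat split; intro E; inversion E; subst; tauto.
  - intros [[x j]|[[p1 p2] hp]]; cbn.
    + exists (x,false), (x,true). split; [intro E; inversion E|].
      intros [y l]; cbn. split.
      * intros ->. destruct l; auto.
      * intros [E|E]; inversion E; auto.
    + exists (p1,false), (p2,true). split; [intro E; inversion E|]. tauto.
Qed.
End S.

Theorem lemma47 :
  exists U E A : formula,
    fv_in U (fun z => z = 0 \/ z = 1) /\
    fv_in E (fun z => z = 0 \/ z = 1 \/ z = 2 \/ z = 3) /\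
    fv_in A (fun z => z = 0 \/ z = 1 \/ z = 2 \/ z = 3) /\
    forall (W : Type) (R : W -> W -> Prop),
      (forall w, ~ R w w) ->
      (forall w u, R w u -> R u w) ->
      (exists w u : W, w <> u) ->
      exists (GA GB : Type) (rho : GA -> GB -> Prop),
        in_K2 GA GB rho /\
        interprets (galaxy_rel GA GB rho) U E A R.
Proof.
  exists U0, E0, A0.
  split; [cbn; lia|]. split; [cbn; lia|]. split; [cbn; lia|].
  intros W R Hirr Hsym [w0 [u0 Hwu]].
  exists (GA W R), (GB W), (rho W R). split; [exact (inK2 W R w0 u0 Hwu)|].
  pose (f := fun (x _ : GA W R + GB W) => match x with inl (inl (w,_)) => w | _ => w0 end).
  assert (HX := Xchar W R Hirr).
  assert (KE : forall s1 s2 t1 t2, sat (Rg W R) (env2 s1 s2) U0 -> sat (Rg W R) (env2 t1 t2) U0 ->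
     (sat (Rg W R) (env4 s1 s2 t1 t2) E0 <-> f s1 s2 = f t1 t2) /\
     (sat (Rg W R) (env4 s1 s2 t1 t2) A0 <-> R (f s1 s2) (f t1 t2))).
  { intros s1 s2 t1 t2 H1 H2.
    destruct (HX _ _ H1) as [w [i [j [-> ->]]]].
    destruct (HX _ _ H2) as [u [k [l [-> ->]]]].
    cbn [f]. split; [apply Echar | apply Achar; assumption]. }
  unfold interprets. fold (Rg W R).
  split; [exists (inl (inl (w0,false))), (inl (inl (w0,true))); apply Xvert|].
  split; [intros s1 s2 H; apply (KE _ _ _ _ H H); reflexivity|].
  split; [intros s1 s2 t1 t2 H1 H2 E; apply (KE _ _ _ _ H2 H1); symmetry; apply (KE _ _ _ _ H1 H2); exact E|].
  split.
  { intros s1 s2 t1 t2 u1 u2 H1 H2 H3 E1 E2. apply (KE _ _ _ _ H1 H3).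
    apply (KE _ _ _ _ H1 H2) in E1. apply (KE _ _ _ _ H2 H3) in E2. congruence. }
  split.
  { intros a1 a2 b1 b2 c1 c2 d1 d2 Ha Hb Hc Hd E1 E2.
    apply (KE _ _ _ _ Ha Hc) in E1. apply (KE _ _ _ _ Hb Hd) in E2.
    rewrite (proj2 (KE _ _ _ _ Ha Hb)), (proj2 (KE _ _ _ _ Hc Hd)), E1, E2. tauto. }
  exists f. split.
  - intro w. exists (inl (inl (w,false))), (inl (inl (w,true))). split; [apply Xvert|reflexivity].
  - exact KE.
Qed.
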